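(* Let $h,n\geq2$ and let $A_h$ be the alternating group. (i) If $h\leq n!$, then $O(A_h\times\{id\})=A_h\times\{id\}$. (ii) If $h>n!$, then $O(A_h\times\{id\})=S_h\times\{id\}$. (iii) $A_h\times\{id\}$ is an anonymity group with respect to $(h,n)$ if and only if $h\leq n!$.
   Context: Permutations compose as $(\sigma\tau)(x)=\sigma(\tau(x))$. Let $G=S_h\times S_n$ and $\mathcal{P}=(S_n)^h$ (preference profiles), with $G$ acting by $(p^{(\varphi,\psi)})_i=\psi\,p_{\varphi^{-1}(i)}$; $p^U=\{p^g:g\in U\}$. $U\leq G$ is regular if for every $p$, $\{g\in U:p^g=p\}\subseteq S_h\times\{id\}$. For regular $U$, $\mathcal{A}(U)$ is the set of regular $V\leq G$ with $V\geq U$ and $p^V\subseteq p^U$ for all $p$, and $O(U)=\langle\mathcal{A}(U)\rangle$. A social preference function (SPF) is any $F:\mathcal{P}\to S_n$; $G(F)=\{(\varphi,\psi)\in G: F(p^{(\varphi,\psi)})=\psi F(p)\ \forall p\}$ and $G_1(F)=G(F)\cap(S_h\times\{id\})$; $U\leq S_h\times\{id\}$ is an anonymity group with respect to $(h,n)$ if $U=G_1(F)$ for some SPF $F$. *)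

(* Defs.v *)
From mathcomp Require Import all_boot all_fingroup all_solvable.
Set Implicit Arguments. Unset Strict Implicit. Unset Printing Implicit Defensive.
Local Open Scope group_scope.

Definition gT (h n : nat) : finGroupType := ({perm 'I_h} * {perm 'I_n})%type.

Definition profile (h n : nat) := {ffun 'I_h -> {perm 'I_n}}.

(* Action: (p^(phi,psi))_i = psi o p_{phi^-1(i)}.
   MathComp's perm product is (s * t) x = t (s x), so psi o q is written q * psi. *)
Definition act (h n : nat) (p : profile h n) (g : gT h n) : profile h n :=
  [ffun i => p (g.1^-1 i) * g.2].

Definition orbitP (h n : nat) (U : {set gT h n}) (p : profile h n) : {set profile h n} :=
  [set act p g | g in U].

Definition SId (h n : nat) : {set gT h n} := [set g : gT h n | g.2 == 1].

Definition AId (h n : nat) : {set gT h n} := [set g : gT h n | (g.1 \in Alt 'I_h) && (g.2 == 1)].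

Definition regular (h n : nat) (U : {set gT h n}) : bool :=
  [forall p : profile h n, [set g in U | act p g == p] \subset SId h n].

Definition inA (h n : nat) (U : {set gT h n}) (V : {group gT h n}) : bool :=
  [&& regular V, U \subset V & [forall p : profile h n, orbitP V p \subset orbitP U p]].

Definition O (h n : nat) (U : {set gT h n}) : {set gT h n} :=
  << \bigcup_(V : {group gT h n} | inA U V) V >>.

Definition GF (h n : nat) (F : profile h n -> {perm 'I_n}) : {set gT h n} :=
  [set g : gT h n | [forall p : profile h n, F (act p g) == F p * g.2]].

Definition G1F (h n : nat) (F : profile h n -> {perm 'I_n}) : {set gT h n} :=
  GF F :&: SId h n.

Definition anonymity_group (h n : nat) (U : {set gT h n}) : Prop :=
  U \subset SId h n /\ exists F : profile h n -> {perm 'I_n}, U = G1F F.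

(* Main.v *)
Require Import Defs.
From mathcomp Require Import all_boot all_fingroup all_solvable.
Import Defs.
Set Implicit Arguments. Unset Strict Implicit. Unset Printing Implicit Defensive.
Local Open Scope group_scope.

Section S.
Variables h n : nat.

Lemma actM (p : profile h n) (g g' : gT h n) : act (act p g) g' = act p (g * g').
Proof. by apply/ffunP=> i; rewrite !ffunE /= mulgA invMg permM. Qed.

Lemma act1 (p : profile h n) : act p 1 = p.
Proof. by apply/ffunP=> i; rewrite !ffunE /= invg1 perm1 mulg1. Qed.

Lemma AIdE (g : gT h n) : (g \in AId h n) = (g.1 \in Alt 'I_h) && (g.2 == 1).
Proof. by rewrite /AId in_set. Qed.

Lemma AId_group_set : group_set (AId h n).
Proof.
apply/group_setP; split; first by rewrite AIdE group1 eqxx.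
move=> x y; rewrite !AIdE => /andP[x1 /eqP x2] /andP[y1 /eqP y2].
by rewrite /= groupM // x2 y2 mulg1 eqxx.
Qed.
Canonical AId_group := group AId_group_set.

Lemma SId_group_set : group_set (SId h n).
Proof.
apply/group_setP; split; first by rewrite inE eqxx.
move=> x y; rewrite !inE => /eqP x2 /eqP y2.
by rewrite /= x2 y2 mulg1 eqxx.
Qed.
Canonical SId_group := group SId_group_set.

Lemma AId_sub : AId h n \subset SId h n.
Proof. by apply/subsetP=> g; rewrite !inE => /andP[]. Qed.

Lemma regular_sub (V : {set gT h n}) : V \subset SId h n -> regular V.
Proof.
move=> sV; apply/forallP=> p; apply/subsetP=> g; rewrite inE => /andP[gV _].
exact: (subsetP sV).
Qed.

Lemma inA_sub (V : {group gT h n}) : inA (AId h n) V -> V \subset SId h n.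
Proof.
case/and3P=> rV sAV /forallP oV; apply/subsetP=> g gV.
pose p : profile h n := [ffun => 1].
have: act p g \in orbitP V p by apply/imsetP; exists g.
move/(subsetP (oV p))/imsetP=> [u uA e].
have uV : u \in V := subsetP sAV u uA.
have st : act p (g * u^-1) = p by rewrite -actM e actM mulgV act1.
have: g * u^-1 \in [set x in V | act p x == p] by rewrite inE groupM ?groupV // st eqxx.
move/(subsetP (forallP rV p)); rewrite !inE /=.
move: uA; rewrite inE => /andP[_ /eqP ->]; by rewrite invg1 mulg1.
Qed.

Lemma AId_inA : inA (AId h n) (AId_group).
Proof.
apply/and3P; split; first exact: regular_sub AId_sub.
  by rewrite subxx.
by apply/forallP=> p; rewrite subxx.
Qed.

Lemma inj_profile : h <= n`! -> exists p : profile h n, injective p.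
Proof.
move=> hle.
have sz : size (enum {perm 'I_n}) = n`! by rewrite -cardE card_Sn.
exists [ffun i : 'I_h => nth 1 (enum {perm 'I_n}) i].
move=> i j; rewrite !ffunE => /eqP; rewrite nth_uniq ?enum_uniq ?sz //.
  by move/eqP/val_inj.
  exact: leq_trans (ltn_ord i) hle.
exact: leq_trans (ltn_ord j) hle.
Qed.

Lemma noninj (p : profile h n) : n`! < h ->
  exists i j, i != j /\ p i = p j.
Proof.
move=> hlt.
have: [exists i, exists j, (i != j) && (p i == p j)].
  case E: [exists i, exists j, (i != j) && (p i == p j)]; first done.
  exfalso; have H := negbT E; move/negP: H => H.
  have inj : injective p.
    move=> i j e; apply/eqP; apply/negPn/negP=> ne; apply: H.
    by apply/existsP; exists i; apply/existsP; exists j; rewrite ne e eqxx.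
  have := @leq_card _ _ (fun i => p i) inj; rewrite card_ord card_Sn => le.
  by move: (leq_ltn_trans le hlt); rewrite ltnn.
case/existsP=> i /existsP[j /andP[ne /eqP e]]; by exists i, j.
Qed.

Lemma even_rep (p : profile h n) (phi : {perm 'I_h}) : n`! < h ->
  exists2 a : {perm 'I_h}, a \in Alt 'I_h & act p (phi, 1) = act p (a, 1).
Proof.
move=> hlt; case: (noninj p hlt) => i [j [ne e]].
case ev: (odd_perm phi).
  exists (tperm i j * phi).
    by rewrite Alt_even odd_mul_tperm ne ev.
  apply/ffunP=> k; rewrite !ffunE /= invMg tpermV permM.
  by case: tpermP => [->|->|] //; rewrite e.
by exists phi; rewrite // Alt_even ev.
Qed.


Lemma inj_act (p : profile h n) (g u : gT h n) : injective p -> g.2 = u.2 ->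
  act p g = act p u -> g.1 = u.1.
Proof.
move=> ip e2 e; apply: invg_inj; apply/permP=> i.
have := congr1 (fun f : profile h n => f i) e; rewrite !ffunE e2 => /(mulIg (u.2)); exact: ip.
Qed.

Lemma orbit_inv1 (p q : profile h n) (u : gT h n) : u \in AId h n ->
  q \in orbitP (AId h n) p -> act q u \in orbitP (AId h n) p.
Proof.
move=> uA /imsetP[v vA ->]; apply/imsetP; exists (v * u); last by rewrite actM.
by rewrite (groupM vA uA : v * u \in AId_group).
Qed.

Lemma orbit_inv (p q : profile h n) (u : gT h n) : u \in AId h n ->
  (act q u \in orbitP (AId h n) p) = (q \in orbitP (AId h n) p).
Proof.
move=> uA; apply/idP/idP; last exact: orbit_inv1.
move=> H; have uV : u^-1 \in AId h n.
  move: uA; rewrite !AIdE /= => /andP[a /eqP ->]; rewrite invg1 eqxx andbT; exact: groupVr.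
by have := orbit_inv1 uV H; rewrite actM mulgV act1.
Qed.

End S.

Theorem mainTheorem18 (h n : nat) (hh : 2 <= h) (hn : 2 <= n) :
  (h <= n`! -> O (AId h n) = AId h n) /\
  (n`! < h -> O (AId h n) = SId h n) /\
  (anonymity_group (AId h n) <-> h <= n`!).
Proof.
split.
  move=> hle; rewrite /O; apply/eqP; rewrite eqEsubset; apply/andP; split.
    rewrite (gen_subG _ (AId_group h n)); apply/bigcupsP => V VA.
    apply/subsetP => g gV.
    have gS := subsetP (inA_sub VA) g gV.
    have [p0 ip0] := inj_profile hle.
    have: act p0 g \in orbitP V p0 by apply/imsetP; exists g.
    case/and3P: VA => _ _ /forallP oV.
    move/(subsetP (oV p0))/imsetP=> [u uA e].
    move: gS; rewrite inE => /eqP g2.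
    have u2 : u.2 = 1 by move: uA; rewrite AIdE => /andP[_ /eqP].
    have e1 := inj_act ip0 (etrans g2 (esym u2)) e.
    by rewrite AIdE e1 g2 eqxx andbT; move: uA; rewrite AIdE => /andP[].
    have HH := (@bigcup_sup _ _ (AId_group h n) (fun V => inA (AId h n) V) (fun V : {group gT h n} => gval V) (AId_inA h n)); exact: (subset_trans HH (sub_gen _)).
split.
  move=> hlt; rewrite /O; apply/eqP; rewrite eqEsubset; apply/andP; split.
    rewrite (gen_subG _ (SId_group h n)); apply/bigcupsP => V VA.
    exact: inA_sub.
    have SA : inA (AId h n) (SId_group h n).
    apply/and3P; split; first exact: regular_sub.
      exact: AId_sub.
    apply/forallP=> p; apply/subsetP=> q /imsetP[g].
    case: g => [phi psi]; rewrite inE /= => /eqP -> ->.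
    have [a aA ea] := even_rep p phi hlt.
    by apply/imsetP; exists (a, 1); rewrite // AIdE aA eqxx.
  have HH := (@bigcup_sup _ _ (SId_group h n) (fun V => inA (AId h n) V) (fun V : {group gT h n} => gval V) SA); exact: (subset_trans HH (sub_gen _)).
split.
  case=> _ [F EF]; rewrite leqNgt; apply/negP => hlt.
  pose i0 : 'I_h := Ordinal (ltn_trans (ltnSn 0) hh).
  pose i1 : 'I_h := Ordinal hh.
  have : (tperm i0 i1, 1) \in G1F F.
    rewrite /G1F in_setI; apply/andP; split; last by rewrite inE.
    rewrite /GF in_set; apply/forallP=> p.
    have [a aA ea] := even_rep p (tperm i0 i1) hlt.
    have : (a, 1) \in G1F F by rewrite -EF AIdE aA eqxx.
    rewrite /G1F in_setI => /andP[]; rewrite /GF in_set => /forallP/(_ p).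
    by rewrite ea.
  by rewrite -EF AIdE Alt_even odd_tperm.
move=> hle; split; first exact: AId_sub.
have [p0 ip0] := inj_profile hle.
pose j0 : 'I_n := Ordinal (ltn_trans (ltnSn 0) hn).
pose j1 : 'I_n := Ordinal hn.
pose sg := tperm j0 j1.
have sg1 : sg != 1.
  apply/eqP => /permP /(_ j0); rewrite tpermL perm1 => /(congr1 val) //.
exists (fun q => if q \in orbitP (AId h n) p0 then sg else 1).
have p0in : p0 \in orbitP (AId h n) p0.
  by apply/imsetP; exists 1; rewrite ?act1 // group1.
apply/setP => g; rewrite /G1F in_setI.
case gA: (g \in AId h n).
  rewrite (subsetP (AId_sub h n) g gA) andbT /GF in_set; apply/esym/forallP => q.
  rewrite orbit_inv //.
  by move: gA; rewrite AIdE => /andP[_ /eqP ->]; rewrite mulg1.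
case g2: (g \in SId h n); last by rewrite andbF.
rewrite andbT /GF in_set; apply/esym/negP => /forallP/(_ p0).
rewrite p0in.
case: ifP => [/imsetP[u uA e] | _].
  move: g2; rewrite inE => /eqP g2.
  have u2 : u.2 = 1 by move: uA; rewrite AIdE => /andP[_ /eqP].
  have e1 := inj_act ip0 (etrans g2 (esym u2)) e.
  move: gA; rewrite AIdE e1 g2 eqxx andbT; move: uA; rewrite AIdE => /andP[-> _].
  done.
move: g2; rewrite inE => /eqP ->; by rewrite mulg1 eq_sym (negbTE sg1).
Qed.
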